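(* Let $c,d>0$ with $\frac1c+\frac1d\ge1$ and $g(x)=xF(c,d;c+d;x)$ for $x\in(0,1)$. Then for all $0<x<1$ and $p,q>0$, $$g\!\left(\frac{x^p}{1+x^p}\right)g\!\left(\frac{x^q}{1+x^q}\right)\le g\!\left(\frac{x^{p+q}}{1+x^{p+q}}\right).$$
   Context: $F(a,b;c;x)$ is the Gaussian hypergeometric function $\sum_{n\ge0}\frac{(a)_n(b)_n}{(c)_n}\frac{x^n}{n!}$ ($|x|<1$), with $(a)_n=a(a+1)\cdots(a+n-1)$, $(a)_0=1$. *)

(* Defs.v *)
From Stdlib Require Import Reals ClassicalEpsilon Arith Factorial.
Open Scope R_scope.

Fixpoint poch (a : R) (n : nat) : R :=
  match n with
  | O => 1
  | S k => poch a k * (a + INR k)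
  end.

Definition hyp_term (a b c x : R) (n : nat) : R :=
  poch a n * poch b n / poch c n * x ^ n / INR (Factorial.fact n).

(* F(a,b;c;x) := sum of the series (when it converges, which it does for |x|<1
   and c not a nonpositive integer); otherwise an unspecified default 0. *)
Definition hypF (a b c x : R) : R :=
  epsilon (inhabits 0)
    (fun l => infinite_sum (hyp_term a b c x) l).

Definition gfun (c d x : R) : R := x * hypF c d (c + d) x.

(* Main.v *)
Require Import Defs.
From Stdlib Require Import Reals Lra Lia Psatz ClassicalEpsilon.
From Coquelicot Require Import Coquelicot.
Open Scope R_scope.

Lemma ser_nonneg (d : nat -> R) l : is_series d l -> (forall n, 0 <= d n) -> 0 <= l.
Proof.
  intros H Hp.
  assert (H0 := is_series_scal 0 d l H).
  assert (E : Series (fun n => scal 0 (d n)) = scal 0 l) by (apply is_series_unique; exact H0).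
  assert (Hl : Series (fun n => scal 0 (d n)) <= Series d).
  { apply Series_le. intro n. unfold scal; simpl; unfold mult; simpl. specialize (Hp n); lra.
    exists l; exact H. }
  rewrite E, (is_series_unique _ _ H) in Hl.
  unfold scal in Hl; simpl in Hl; unfold mult in Hl; simpl in Hl. lra.
Qed.

Lemma poch_pos a n : 0 < a -> 0 < poch a n.
Proof.
  intro Ha; induction n; simpl. lra.
  apply Rmult_lt_0_compat; auto. pose proof (pos_INR n); lra.
Qed.

Definition coef (c d : R) (n : nat) : R :=
  poch c n * poch d n / poch (c + d) n / INR (Factorial.fact n).

Lemma coef_pos c d n : 0 < c -> 0 < d -> 0 < coef c d n.
Proof.
  intros; unfold coef.
  pose proof (poch_pos c n H). pose proof (poch_pos d n H0).
  pose proof (poch_pos (c+d) n ltac:(lra)).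
  pose proof (INR_fact_lt_0 n).
  unfold Rdiv. repeat apply Rmult_lt_0_compat; auto; apply Rinv_0_lt_compat; auto.
Qed.

Lemma coef_S c d n : 0 < c -> 0 < d ->
  coef c d (S n) = coef c d n * ((c + INR n) * (d + INR n) / ((c + d + INR n) * (INR n + 1))).
Proof.
  intros; unfold coef; simpl poch.
  rewrite fact_simpl, mult_INR, S_INR.
  pose proof (poch_pos c n H). pose proof (poch_pos d n H0).
  pose proof (poch_pos (c+d) n ltac:(lra)).
  pose proof (INR_fact_lt_0 n). pose proof (pos_INR n).
  field. repeat split; lra.
Qed.

Lemma coef_dec c d n : 0 < c -> 0 < d -> c * d <= c + d ->
  coef c d (S n) <= coef c d n.
Proof.
  intros. rewrite coef_S; auto.
  pose proof (coef_pos c d n H H0). pose proof (pos_INR n).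
  assert (R1 : (c + INR n) * (d + INR n) / ((c + d + INR n) * (INR n + 1)) <= 1).
  { apply Rmult_le_reg_r with ((c + d + INR n) * (INR n + 1)).
    apply Rmult_lt_0_compat; lra.
    unfold Rdiv. rewrite Rmult_assoc, Rinv_l. 2: nra. nra. }
  nra.
Qed.

Lemma coef_0 c d : coef c d 0 = 1.
Proof. unfold coef; simpl; field. Qed.

Lemma coef_le1 c d n : 0 < c -> 0 < d -> c * d <= c + d -> coef c d n <= 1.
Proof.
  intros. induction n. rewrite coef_0; lra.
  pose proof (coef_dec c d n H H0 H1); lra.
Qed.

Definition u c d y n := coef c d n * y ^ n.

Lemma hyp_term_u c d y n : hyp_term c d (c + d) y n = u c d y n.
Proof. unfold hyp_term, u, coef. unfold Rdiv. ring. Qed.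

Lemma ex_u c d y : 0 < c -> 0 < d -> c * d <= c + d -> 0 <= y < 1 ->
  ex_series (u c d y).
Proof.
  intros. apply (@ex_series_le R_AbsRing R_CompleteNormedModule _ (fun n => y ^ n)).
  - intro n. unfold norm; simpl; unfold abs; simpl. unfold u.
    pose proof (coef_pos c d n H H0). pose proof (coef_le1 c d n H H0 H1).
    pose proof (pow_le y n ltac:(lra)).
    rewrite Rabs_right. 2: apply Rle_ge; apply Rmult_le_pos; lra. nra.
  - apply ex_series_geom. rewrite Rabs_right; lra.
Qed.

Lemma hypF_eq c d y : 0 < c -> 0 < d -> c * d <= c + d -> 0 <= y < 1 ->
  is_series (u c d y) (hypF c d (c + d) y).
Proof.
  intros. destruct (ex_u c d y H H0 H1 H2) as [l Hl].
  assert (Hs : infinite_sum (hyp_term c d (c + d) y) l).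
  { apply is_series_Reals in Hl.
    intros e he; destruct (Hl e he) as [N HN]; exists N; intros n hn.
    specialize (HN n hn). revert HN.
    replace (sum_f_R0 (hyp_term c d (c + d) y) n) with (sum_f_R0 (u c d y) n); auto.
    apply sum_eq; intros; rewrite hyp_term_u; auto. }
  unfold hypF.
  pose proof (epsilon_spec (inhabits 0) (fun l => infinite_sum (hyp_term c d (c + d) y) l) (ex_intro _ l Hs)) as He.
  simpl in He.
  replace (epsilon (inhabits 0) (fun l => infinite_sum (hyp_term c d (c + d) y) l)) with l; auto.
  eapply uniqueness_sum; eauto.
Qed.

Definition w c d y n := match n with O => 0 | S k => coef c d k * y ^ (S k) end.

Lemma phi_series c d y : 0 < c -> 0 < d -> c * d <= c + d -> 0 <= y < 1 ->
  is_series (fun n => u c d y n - w c d y n) ((1 - y) * hypF c d (c + d) y).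
Proof.
  intros. pose proof (hypF_eq c d y H H0 H1 H2) as HF.
  assert (Hw : is_series (w c d y) (y * hypF c d (c + d) y)).
  { apply is_series_decr_1. simpl w at 2.
    match goal with |- is_series _ ?L => replace L with (scal y (hypF c d (c + d) y))
      by (unfold plus, opp, scal; simpl; unfold mult; simpl; ring) end.
    apply (is_series_ext (fun n => scal y (u c d y n))).
    intro n; unfold scal, u; simpl; unfold mult; simpl. ring.
    apply (is_series_scal y _ _ HF). }
  pose proof (is_series_minus _ _ _ _ HF Hw) as Hm.
  replace ((1 - y) * hypF c d (c + d) y) with (plus (hypF c d (c + d) y) (opp (y * hypF c d (c + d) y)))
    by (unfold plus, opp; simpl; ring).
  exact Hm.
Qed.

Lemma phi_mono c d y1 y2 : 0 < c -> 0 < d -> c * d <= c + d -> 0 <= y1 -> y1 <= y2 -> y2 < 1 ->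
  (1 - y2) * hypF c d (c + d) y2 <= (1 - y1) * hypF c d (c + d) y1.
Proof.
  intros. pose proof (phi_series c d y1 H H0 H1 ltac:(lra)) as S1.
  pose proof (phi_series c d y2 H H0 H1 ltac:(lra)) as S2.
  pose proof (is_series_minus _ _ _ _ S1 S2) as Sm.
  apply ser_nonneg in Sm. unfold plus, opp in Sm; simpl in Sm. lra.
  intro n. unfold plus, opp; simpl. destruct n as [|k].
  - unfold u, w; simpl. lra.
  - unfold u, w. pose proof (coef_dec c d k H H0 H1).
    assert (y1 ^ S k <= y2 ^ S k) by (apply pow_incr; lra). nra.
Qed.

Lemma phi_le1 c d y : 0 < c -> 0 < d -> c * d <= c + d -> 0 <= y < 1 ->
  (1 - y) * hypF c d (c + d) y <= 1.
Proof.
  intros. pose proof (phi_mono c d 0 y H H0 H1 ltac:(lra) ltac:(lra) ltac:(lra)).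
  assert (E : hypF c d (c + d) 0 <= 1).
  { pose proof (hypF_eq c d 0 H H0 H1 ltac:(lra)) as Sx.
    assert (S' : is_series (fun k => u c d 0 (S k)) (hypF c d (c + d) 0 - 1)).
    { apply is_series_incr_1. unfold u at 2; rewrite coef_0; simpl.
      unfold plus; simpl. replace (hypF c d (c + d) 0 - 1 + 1 * 1) with (hypF c d (c + d) 0) by ring.
      exact Sx. }
    apply (is_series_scal (-1)) in S'. apply ser_nonneg in S'.
    unfold scal in S'; simpl in S'; unfold mult in S'; simpl in S'. lra.
    intro n; unfold scal, u; simpl; unfold mult; simpl. lra. }
  lra.
Qed.

Lemma F_nonneg c d y : 0 < c -> 0 < d -> c * d <= c + d -> 0 <= y < 1 ->
  0 <= hypF c d (c + d) y.
Proof.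
  intros. apply (ser_nonneg _ _ (hypF_eq c d y H H0 H1 H2)).
  intro n; unfold u. pose proof (coef_pos c d n H H0). pose proof (pow_le y n ltac:(lra)). nra.
Qed.

Lemma g_t c d t : 0 < t -> gfun c d (t / (1 + t)) = t * ((1 - t / (1 + t)) * hypF c d (c + d) (t / (1 + t))).
Proof. intros. unfold gfun. field. lra. Qed.


Theorem mainTheorem16 (c d : R) (hc : 0 < c) (hd : 0 < d)
  (hcd : 1 / c + 1 / d >= 1) (x p q : R)
  (hx0 : 0 < x) (hx1 : x < 1) (hp : 0 < p) (hq : 0 < q) :
  gfun c d (Rpower x p / (1 + Rpower x p)) *
  gfun c d (Rpower x q / (1 + Rpower x q))
  <= gfun c d (Rpower x (p + q) / (1 + Rpower x (p + q))).
Proof.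
  assert (H1 : c * d <= c + d).
  { assert (1 / c + 1 / d = (c + d) / (c * d)) by (field; lra).
    rewrite H in hcd. apply Rge_le in hcd.
    apply Rmult_le_compat_r with (r := c * d) in hcd. 2: nra.
    unfold Rdiv in hcd. rewrite Rmult_assoc, Rinv_l in hcd; nra. }
  rewrite Rpower_plus.
  set (t := Rpower x p). set (s := Rpower x q).
  assert (Lx : ln x < 0) by (rewrite <- ln_1; apply ln_increasing; lra).
  assert (Ht : 0 < t < 1).
  { unfold t, Rpower. split. apply exp_pos. rewrite <- exp_0. apply exp_increasing. nra. }
  assert (Hs : 0 < s < 1).
  { unfold s, Rpower. split. apply exp_pos. rewrite <- exp_0. apply exp_increasing. nra. }
  assert (Hts : 0 < t * s < t) by nra.
  rewrite !g_t by nra.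
  set (yt := t / (1 + t)). set (ys := s / (1 + s)). set (yts := t * s / (1 + t * s)).
  assert (Yt : 0 <= yt < 1) by (unfold yt; split; [apply Rmult_le_pos; [lra|left; apply Rinv_0_lt_compat; lra] | apply Rmult_lt_reg_r with (1 + t); [lra| unfold Rdiv; rewrite Rmult_assoc, Rinv_l; lra]]).
  assert (Ys : 0 <= ys < 1) by (unfold ys; split; [apply Rmult_le_pos; [lra|left; apply Rinv_0_lt_compat; lra] | apply Rmult_lt_reg_r with (1 + s); [lra| unfold Rdiv; rewrite Rmult_assoc, Rinv_l; lra]]).
  assert (Yts : 0 <= yts <= yt).
  { unfold yts, yt. split. apply Rmult_le_pos; [nra|left; apply Rinv_0_lt_compat; nra].
    apply Rmult_le_reg_r with ((1 + t) * (1 + t * s)). nra.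
    replace (t * s / (1 + t * s) * ((1 + t) * (1 + t * s))) with (t * s * (1 + t)) by (field; nra).
    replace (t / (1 + t) * ((1 + t) * (1 + t * s))) with (t * (1 + t * s)) by (field; nra).
    nra. }
  pose proof (phi_mono c d yts yt hc hd H1 ltac:(lra) ltac:(lra) ltac:(lra)) as M.
  pose proof (phi_le1 c d ys hc hd H1 Ys) as U.
  pose proof (F_nonneg c d yt hc hd H1 Yt) as N.
  set (pt := (1 - yt) * hypF c d (c + d) yt) in *.
  set (ps := (1 - ys) * hypF c d (c + d) ys) in *.
  set (pts := (1 - yts) * hypF c d (c + d) yts) in *.
  assert (0 <= pt) by (unfold pt; apply Rmult_le_pos; lra).
  assert (pt * ps <= pts) by nra.
  assert (0 < t * s) by nra.
  replace (t * pt * (s * ps)) with ((t * s) * (pt * ps)) by ring.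
  apply Rmult_le_compat_l; lra.
Qed.
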